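(* Let $q_1=\dfrac{\rho\varepsilon}{1-\rho(1-\varepsilon)}$ and $q_2=(1-\varepsilon)^{I-1}$, and let $\bar\varepsilon\in(0,1)$ be the unique value of $\varepsilon$ at which $q_1=q_2$. If $0<\varepsilon<\bar\varepsilon$ then for every information tree $\mathcal T$ and every $p$: $C^p_{\mathcal T}(G)=\Omega$ if $p\le q_1$; $C^p_{\mathcal T}(G)=Y^*$ if $q_1<p\le q_2$; $C^p_{\mathcal T}(G)=\varnothing$ if $p>q_2$.
   Context: Model. Fix an integer $I\ge2$, agents $\mathcal I=\{1,\dots,I\}$, a prior $\rho\in(0,1)$ and a loss probability $\varepsilon\in(0,1)$. A state of nature $\theta\in\{g,b\}$ has $\Pr(\theta=g)=\rho$. A forest $F$ on $\mathcal I$ is a collection of vertex-disjoint undirected trees $T^1,\dots,T^R$ whose vertex sets partition $\mathcal I$; a seeding $s=(s^1,\dots,s^R)$ chooses exactly one vertex $s^r$ of each $T^r$. The pair $\mathcal T=(F,s)$ is an information tree: orient each $T^r$ away from $s^r$ and add a root $0$ (the planner) with an arc $0\to s^r$ for each $r$. If $\theta=b$ no messages are sent. If $\theta=g$ the planner sends a message along each arc $0\to s^r$, and every agent who receives a message forwards it along every arc leaving her. Each transmission along an arc is lost independently with probability $\varepsilon$. Agent $i$ observes only $x_i\in\{y,n\}$ (received / not). $\Omega=\{g,b\}\times\{y,n\}^I$, $\mathbb P_{\mathcal T}$ the induced probability. $G=\{\theta=g\}$, $Y_i=\{x_i=y\}$, $N_i=\Omega\setminus Y_i$, $Y^*=\bigcap_iY_i$.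 $B^p_i(E)=\{\omega:\mathbb P_{\mathcal T}[E\mid x_i=x_i(\omega)]\ge p\}$, $B^p(E)=\bigcap_iB^p_i(E)$, $B^{p,0}(E)=E$, $B^{p,\ell}(E)=B^p(B^{p,\ell-1}(E))$, $C^p_{\mathcal T}(E)=\bigcap_{\ell\ge1}B^{p,\ell}(E)$. For any seed $1$, $\mathbb P_{\mathcal T}[G\mid N_1]=q_1$ and $\mathbb P_{\mathcal T}[Y^*\mid Y_1]=q_2$; $q_1$ is increasing and $q_2$ decreasing in $\varepsilon$. *)

(* Defs.v *)
From HB Require Import structures.
From mathcomp Require Import all_boot all_order all_algebra.
Set Implicit Arguments. Unset Strict Implicit. Unset Printing Implicit Defensive.
Import Order.TTheory GRing.Theory Num.Theory.
Local Open Scope ring_scope.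

(* An information tree on agents 'I_I: each agent i has a parent
   [par i] : None = the planner (root 0, i.e. i is a seed), Some j = agent j.
   This is exactly the oriented rooted forest (F, s) plus the root 0. *)
Definition info_tree (I : nat) (par : 'I_I -> option 'I_I) : Prop :=
  forall i : 'I_I, exists k : nat, iter k (fun o => obind par o) (Some i) = None.

(* State space Omega = {g,b} x {y,n}^I ; true = g, true = y (received). *)
Definition Omega (I : nat) := (bool * {ffun 'I_I -> bool})%type.

Section Model.
Variables (R : realFieldType) (I : nat) (rho eps : R) (par : 'I_I -> option 'I_I).

(* did the parent of i receive the message (the planner always "has" it) *)
Definition parent_rec (x : {ffun 'I_I -> bool}) (i : 'I_I) : bool :=
  if par i is Some j then x j else true.

Definition trans (pr xi : bool) : R :=
  if pr then (if xi then 1 - eps else eps) else (if xi then 0 else 1).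

Definition weight (w : Omega I) : R :=
  if w.1 then rho * \prod_(i : 'I_I) trans (parent_rec w.2 i) (w.2 i)
  else (1 - rho) * (if [forall i, ~~ w.2 i] then 1 else 0).

Definition Prob (E : {set Omega I}) : R := \sum_(w in E) weight w.

Definition obs (i : 'I_I) (v : bool) : {set Omega I} := [set w : Omega I | w.2 i == v].

Definition cond (E : {set Omega I}) (i : 'I_I) (v : bool) : R :=
  Prob (E :&: obs i v) / Prob (obs i v).

Definition Bi (p : R) (i : 'I_I) (E : {set Omega I}) : {set Omega I} :=
  [set w : Omega I | p <= cond E i (w.2 i)].

Definition Bp (p : R) (E : {set Omega I}) : {set Omega I} :=
  \bigcap_(i : 'I_I) Bi p i E.

Definition Cp (p : R) (E : {set Omega I}) (w : Omega I) : Prop :=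
  forall l : nat, w \in iter l.+1 (Bp p) E.

End Model.

Definition Gev (I : nat) : {set Omega I} := [set w : Omega I | w.1].
Definition Ystar (I : nat) : {set Omega I} := [set w : Omega I | [forall i, w.2 i]].

Definition q1 (R : realFieldType) (rho eps : R) : R := rho * eps / (1 - rho * (1 - eps)).
Definition q2 (R : realFieldType) (I : nat) (eps : R) : R := (1 - eps) ^+ I.-1.

(* Main.v *)
Require Import Defs.
From mathcomp Require Import all_boot all_order all_algebra.
From mathcomp Require Import ring lra.
From Stdlib Require Import Classical.
Set Implicit Arguments. Unset Strict Implicit. Unset Printing Implicit Defensive.
Import Order.TTheory GRing.Theory Num.Theory.
Local Open Scope ring_scope.

Section Marg.
Variables (R : realFieldType) (I : nat) (eps : R) (par : 'I_I -> option 'I_I).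
Hypothesis Htree : info_tree par.

Local Notation X := {ffun 'I_I -> bool}.
Local Notation pr := (parent_rec par).
Definition Wt (x : X) : R := \prod_(i : 'I_I) trans eps (pr x i) (x i).
Definition WU (U : {set 'I_I}) (x : X) : R := \prod_(i in U) trans eps (pr x i) (x i).
Definition ZU (U : {set 'I_I}) (x : X) : bool := [forall i, (i \notin U) ==> ~~ x i].
Definition anc_closed (U : {set 'I_I}) := forall i k, i \in U -> par i = Some k -> k \in U.
Definition dep (U : {set 'I_I}) (f : X -> R) :=
  forall x y : X, (forall i, i \in U -> x i = y i) -> f x = f y.

Lemma pr_dep U (x y : X) i : anc_closed U -> i \in U -> (forall i, i \in U -> x i = y i) ->
  pr x i = pr y i.
Proof.
move=> hU iU hxy; rewrite /parent_rec; case E: (par i) => [k|] //.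
by apply: hxy; apply: hU E.
Qed.

Lemma WU_dep U : anc_closed U -> dep U (WU U).
Proof.
move=> hU x y hxy; apply: eq_bigr => i iU.
by rewrite (pr_dep hU iU hxy) hxy.
Qed.

Definition flip (j : 'I_I) (x : X) : X := [ffun i => if i == j then ~~ x i else x i].

Lemma flipK j : involutive (flip j).
Proof. by move=> x; apply/ffunP => i; rewrite !ffunE; case: eqP => // _; rewrite negbK. Qed.

Lemma WU_U1 (U : {set 'I_I}) j (x : X) : j \notin U -> WU (j |: U) x = trans eps (pr x j) (x j) * WU U x.
Proof. by move=> jU; rewrite /WU big_setU1. Qed.

Lemma step U j (g : X -> R) (h : bool -> R) :
  anc_closed U -> j \notin U -> (forall k, par j = Some k -> k \in U) -> dep U g ->
  \sum_(x | ZU (j |: U) x) WU (j |: U) x * g x * h (x j) =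
  \sum_(x | ZU U x) WU U x * g x *
     (trans eps (pr x j) false * h false + trans eps (pr x j) true * h true).
Proof.
move=> hU jU hj hg.
rewrite (bigID (fun x : X => x j)) /= addrC.
symmetry; under eq_bigr => x _ do rewrite mulrDr.
rewrite big_split /=; symmetry; congr (_ + _).
- apply: eq_big => [x|x].
  + rewrite /ZU; apply/andP/forallP => [[/forallP H nj] i|H].
      apply/implyP => iU; case: (i =P j) => [->//|/eqP ij].
      by apply: (implyP (H i)); rewrite in_setU1 negb_or ij.
    split; last by apply: (implyP (H j)).
    apply/forallP => i; apply/implyP => iU; apply: (implyP (H i)).
    by move: iU; rewrite in_setU1 negb_or => /andP[].
  + move=> /andP[_ nj]; rewrite WU_U1 // (negbTE nj).
    by ring.
- rewrite (reindex_inj (can_inj (flipK j))) /=.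
  apply: eq_big => [x|x].
  + rewrite /ZU /flip ffunE eqxx; apply/andP/forallP => [[/forallP H nj] i|H].
      apply/implyP => iU; case: (i =P j) => [->//|/eqP ij].
      have := implyP (H i); rewrite ffunE (negbTE ij); apply.
      by rewrite in_setU1 negb_or ij.
    split; last by apply: (implyP (H j)).
    apply/forallP => i; apply/implyP => iU; rewrite ffunE.
    case: eqP iU => [->|/eqP ij] iU; first by rewrite setU11 in iU.
    apply: (implyP (H i)).
    by move: iU; rewrite in_setU1 negb_or => /andP[].
  + move=> /andP[_ fj].
    have nj : ~~ x j by move: fj; rewrite ffunE eqxx.
    have agree : forall i, i \in U -> flip j x i = x i.
      by move=> i iU; rewrite ffunE; case: eqP => // eij; move: iU; rewrite eij (negbTE jU).
    rewrite WU_U1 // ffunE eqxx (negbTE nj) /=.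
    rewrite (WU_dep hU agree) (hg _ _ agree).
    have -> : pr (flip j x) j = pr x j.
      rewrite /parent_rec; case E: (par j) => [k|] //.
      by apply: agree; apply: hj.
    by ring.
Qed.


Lemma frontier (U : {set 'I_I}) j0 : j0 \notin U ->
  exists j, j \notin U /\ (forall k, par j = Some k -> k \in U).
Proof.
move=> j0U; have [m Hm] := Htree j0.
pose Q n := if iter n (fun o => obind par o) (Some j0) is Some i then i \in U else true.
have exQ : exists n, Q n by exists m; rewrite /Q Hm.
case: (ex_minnP exQ) => n Qn minn.
case: n Qn minn => [|n] Qn minn; first by rewrite /Q /= (negbTE j0U) in Qn.
have : ~~ Q n by apply/negP => Qn'; have := minn _ Qn'; rewrite ltnn.
rewrite /Q; case E: (iter n _ (Some j0)) => [j|] // jU.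
exists j; split => // k pk; move: Qn; by rewrite /Q iterS E /= pk.
Qed.

Lemma anc_add (U : {set 'I_I}) j : anc_closed U -> (forall k, par j = Some k -> k \in U) ->
  anc_closed (j |: U).
Proof.
move=> hU hj i k; rewrite in_setU1 => /orP[/eqP->|iU] pk; rewrite in_setU1.
  by rewrite (hj _ pk) orbT.
by rewrite (hU _ _ iU pk) orbT.
Qed.

Lemma marg_n n : forall U, #|~: U| = n -> anc_closed U -> forall f, dep U f ->
  \sum_x Wt x * f x = \sum_(x | ZU U x) WU U x * f x.
Proof.
elim: n => [|n IH] U hn hU f hf.
  have := cards0_eq hn => /(congr1 (fun A => ~: A)); rewrite setCK setC0 => ->.
  apply: eq_big => [x|x _]; first by symmetry; apply/forallP => i; rewrite in_setT.
  by rewrite /WU /Wt (eq_bigl _ _ (fun i => in_setT i)).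
have [j0 j0U] : exists j0, j0 \in ~: U by apply/card_gt0P; rewrite hn.
rewrite inE in j0U; have [j [jU hj]] := frontier j0U.
have hU' := anc_add hU hj.
have hn' : #|~: (j |: U)| = n.
  have := cardsD1 j (~: U); rewrite hn in_setC jU /= add1n => -[->].
  by apply: eq_card => i; rewrite !inE negb_or.
have hf' : dep (j |: U) f.
  by move=> x y hxy; apply: hf => i iU; apply: hxy; rewrite in_setU1 iU orbT.
rewrite (IH _ hn' hU' f hf').
transitivity (\sum_(x | ZU (j |: U) x) WU (j |: U) x * f x * (fun _ => (1 : R)) (x j)).
  by apply: eq_bigr => x _; rewrite mulr1.
etransitivity; first exact: (@step U j f (fun _ => 1) hU jU hj hf).
apply: eq_bigr => x _.
by case: (pr x j) => /=; ring.
Qed.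

Lemma marg U f : anc_closed U -> dep U f ->
  \sum_x Wt x * f x = \sum_(x | ZU U x) WU U x * f x.
Proof. by move=> hU hf; apply: (@marg_n _ U erefl hU f hf). Qed.

Lemma set_of (P : 'I_I -> Prop) : exists S : {set 'I_I}, forall k, k \in S <-> P k.
Proof.
suff: forall s : seq 'I_I, exists S : {set 'I_I}, forall k, k \in s -> (k \in S <-> P k).
  by move=> /(_ (enum 'I_I)) [S HS]; exists S => k; apply: HS; rewrite mem_enum.
elim => [|a s [S HS]]; first by exists set0.
case: (classic (P a)) => Pa; [exists (a |: S) | exists (S :\ a)] => k;
  rewrite in_cons => /orP[/eqP->|ks].
- by rewrite setU11.
- rewrite in_setU1; case: eqP => [->|_] /=; first by split.
  exact: HS.
- by rewrite setD11; split.
- rewrite in_setD1; case: eqP => [->|_] /=; first by split.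
  exact: HS.
Qed.

Lemma anc_exists j : exists S : {set 'I_I},
  anc_closed S /\ j \notin S /\ (forall k, par j = Some k -> k \in S).
Proof.
have [S HS] := set_of (fun k => exists n, iter n.+1 (fun o => obind par o) (Some j) = Some k).
exists S; split; [|split].
- move=> i k /HS [n Hn] pk; apply/HS; exists n.+1; by rewrite iterS Hn /= pk.
- apply/negP => /HS [n Hn]; have [m Hm] := Htree j.
  have per : forall t, iter (t * n.+1) (fun o => obind par o) (Some j) = Some j.
    by elim => [|t IHt] //; rewrite mulSn iterD IHt Hn.
  have none : forall t, iter (m + t) (fun o => obind par o) (Some j) = None.
    by elim => [|t IHt]; rewrite ?addn0 // addnS iterS IHt.
  by have := per m; rewrite mulnS none.
- by move=> k pk; apply/HS; exists 0; rewrite /= pk.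
Qed.

Lemma ratio j : \sum_(x : X | x j) Wt x = (1 - eps) * \sum_(x : X | pr x j) Wt x.
Proof.
have [S [hS [jS hj]]] := anc_exists j.
have hS' := anc_add hS hj.
transitivity (\sum_(x : X) Wt x * (if x j then 1 else 0)).
  by rewrite big_mkcond; apply: eq_bigr => x _; case: (x j); rewrite ?mulr1 ?mulr0.
transitivity ((1 - eps) * \sum_(x : X) Wt x * (if pr x j then 1 else 0)); last first.
  by congr (_ * _); rewrite [RHS]big_mkcond; apply: eq_bigr => x _; case: (pr x j); rewrite ?mulr1 ?mulr0.
rewrite (marg (f := fun x : X => if x j then 1 else 0) hS'); last first.
  by move=> x y hxy; rewrite hxy // setU11.
rewrite (marg (f := fun x : X => if pr x j then 1 else 0) hS); last first.
  move=> x y hxy; rewrite /parent_rec; case E: (par j) => [k|] //.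
  by rewrite hxy // hj.
transitivity (\sum_(x | ZU (j |: S) x) WU (j |: S) x * (fun _ => (1 : R)) x *
   (fun b : bool => if b then (1 : R) else 0) (x j)).
  by apply: eq_bigr => x _; rewrite mulr1.
etransitivity; first exact: (@step S j (fun _ => 1) (fun b : bool => if b then (1 : R) else 0) hS jS hj (fun _ _ _ => erefl)).
rewrite mulr_sumr; apply: eq_bigr => x _.
by case: (pr x j) => /=; ring.
Qed.

Lemma total : \sum_x Wt x = 1.
Proof.
transitivity (\sum_(x : X) Wt x * (fun _ => (1 : R)) x); first by apply: eq_bigr => x _; rewrite mulr1.
rewrite (marg (U := set0)) //; last by move=> i k; rewrite in_set0.
transitivity (\sum_(x : X | x == [ffun _ => false]) (1 : R)); last by rewrite big_pred1_eq.
apply: eq_big => [x|x _]; last by rewrite /WU big_set0 mulr1.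
apply/forallP/eqP => [H|->]; last by move=> i; rewrite in_set0 ffunE.
by apply/ffunP => i; rewrite ffunE; apply/negbTE; apply: (implyP (H i)); rewrite in_set0.
Qed.

End Marg.

Section ProbSec.
Variables (R : realFieldType) (I : nat) (rho eps : R) (par : 'I_I -> option 'I_I).
Hypothesis Htree : info_tree par.
Hypothesis rho0 : 0 < rho.
Hypothesis rho1 : rho < 1.
Hypothesis eps0 : 0 < eps.
Hypothesis eps1 : eps < 1.

Local Notation X := {ffun 'I_I -> bool}.
Local Notation pr := (parent_rec par).
Local Notation W := (Wt eps par).
Local Notation P := (Prob rho eps par).
Local Notation cnd := (cond rho eps par).

Local Ltac H4 := move: (rho0) (rho1) (eps0) (eps1) => ? ? ? ?.

Definition x0 : X := [ffun _ => false].
Definition x1 : X := [ffun _ => true].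

Lemma trans_ge0 b c : 0 <= trans eps b c.
Proof. rewrite /trans; case: b; case: c; move: eps0 eps1 => e0 e1; lra. Qed.

Lemma W_ge0 x : 0 <= W x.
Proof. by apply: prodr_ge0 => i _; apply: trans_ge0. Qed.

Lemma weight_ge0 w : 0 <= weight rho eps par w.
Proof.
rewrite /weight; case: ifP => _.
  by apply: mulr_ge0; [H4; lra| apply: W_ge0].
by apply: mulr_ge0; [H4; lra| case: ifP => _; H4; lra].
Qed.

Lemma all_false (x : X) : [forall i, ~~ x i] = (x == x0).
Proof.
apply/forallP/eqP => [H|->]; last by move=> i; rewrite ffunE.
by apply/ffunP => i; rewrite ffunE; apply/negbTE.
Qed.

Lemma ProbE (E : {set Omega I}) :
  P E = rho * \sum_(x : X | (true, x) \in E) W x +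
        (1 - rho) * (if (false, x0) \in E then 1 else 0).
Proof.
rewrite /Prob big_mkcond.
transitivity (\sum_(a : bool) \sum_(x : X)
   (if (a, x) \in E then weight rho eps par (a, x) else 0)).
  by rewrite pair_big; apply: eq_big => -[a x].
rewrite big_bool /=; congr (_ + _).
  rewrite mulr_sumr [RHS]big_mkcond; apply: eq_bigr => x _.
  by case: ifP; rewrite ?mulr0.
transitivity (\sum_(x : X) (if x == x0 then
     (1 - rho) * (if (false, x0) \in E then 1 else 0) else 0)).
  apply: eq_bigr => x _; rewrite /weight /= all_false.
  by case: eqP => [->|_]; case: ifP; rewrite ?mulr0 ?mulr1.
by rewrite -big_mkcond big_pred1_eq.
Qed.

Lemma sum_ge (Q : pred X) y : Q y -> W y <= \sum_(x | Q x) W x.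
Proof.
move=> Qy; rewrite (bigD1 y) //= lerDl.
by apply: sumr_ge0 => x _; apply: W_ge0.
Qed.

Definition aa (i : 'I_I) := \sum_(x : X | pr x i) W x.

Lemma W_x1 : W x1 = (1 - eps) ^+ I.
Proof.
rewrite /Wt (eq_bigr (fun _ => 1 - eps)); last first.
  move=> i _; rewrite /parent_rec ffunE; by case: (par i) => [k|] //=; rewrite ffunE.
by rewrite prodr_const card_ord.
Qed.

Lemma aa_gt0 i : 0 < aa i.
Proof.
apply: (lt_le_trans _ (sum_ge (y := x1) _)); last first.
  by rewrite /parent_rec; case: (par i) => [k|] //; rewrite ffunE.
rewrite W_x1; apply: exprn_gt0; H4; lra.
Qed.

Lemma aa_le1 i : aa i <= 1.
Proof.
rewrite -(total eps Htree) /aa [X in _ <= X](bigID (fun x : X => pr x i)) /= lerDl.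
by apply: sumr_ge0 => x _; apply: W_ge0.
Qed.

Lemma sumT i : \sum_(x : X | x i) W x = (1 - eps) * aa i.
Proof. exact: ratio. Qed.

Lemma sumF i : \sum_(x : X | ~~ x i) W x = 1 - (1 - eps) * aa i.
Proof.
have := total eps Htree; rewrite (bigID (fun x : X => x i)) /= -sumT => <-; ring.
Qed.

Lemma W_zero (x : X) i : x i -> ~~ pr x i -> W x = 0.
Proof.
move=> xi npr; rewrite /Wt (bigD1 i) //= xi (negbTE npr) /= mul0r //.
Qed.

Lemma sum_prF i : \sum_(x : X | pr x i && ~~ x i) W x = eps * aa i.
Proof.
have e : \sum_(x : X | pr x i && x i) W x = \sum_(x : X | x i) W x.
  rewrite [RHS](bigID (fun x : X => pr x i)) /= [X in _ = _ + X]big1 ?addr0; last first.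
    by move=> x /andP[xi npr]; apply: (W_zero xi npr).
  by apply: eq_bigl => x; rewrite andbC.
have H : aa i = \sum_(x : X | pr x i && x i) W x + \sum_(x : X | pr x i && ~~ x i) W x.
  by rewrite /aa (bigID (fun x : X => x i)).
move: H; rewrite e sumT.
set B := \sum_(x : X | pr x i && ~~ x i) W x => H.
have -> : B = aa i - (1 - eps) * aa i by rewrite {1}H; ring.
ring.
Qed.

Lemma P_obsT i : P (obs i true) = rho * ((1 - eps) * aa i).
Proof.
rewrite ProbE !inE /= ffunE /= mulr0 addr0 -sumT; congr (_ * _).
by apply: eq_bigl => x; rewrite inE /=; case: (x i).
Qed.

Lemma P_obsF i : P (obs i false) = rho * (1 - (1 - eps) * aa i) + (1 - rho).
Proof.
rewrite ProbE !inE /= ffunE /= mulr1 -sumF; congr (_ * _ + _).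
by apply: eq_bigl => x; rewrite inE /=; case: (x i).
Qed.

Lemma P_obsT_gt0 i : 0 < P (obs i true).
Proof.
rewrite P_obsT; apply: mulr_gt0 => //; apply: mulr_gt0; last exact: aa_gt0.
by H4; lra.
Qed.

Lemma t_le1 i : (1 - eps) * aa i <= 1.
Proof.
rewrite -[1 in X in _ <= X](mulr1 1); apply: ler_pM; try (H4; lra).
  by apply: ltW; apply: aa_gt0.
exact: aa_le1.
Qed.

Lemma P_obsF_gt0 i : 0 < P (obs i false).
Proof.
rewrite P_obsF; have := t_le1 i; set t := (1 - eps) * aa i => ht.
have : 0 <= rho * (1 - t) by apply: mulr_ge0; H4; lra.
by H4; lra.
Qed.

Lemma P_obs_gt0 i v : 0 < P (obs i v).
Proof. by case: v; [apply: P_obsT_gt0 | apply: P_obsF_gt0]. Qed.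

Lemma P_mono (E F : {set Omega I}) : E \subset F -> P E <= P F.
Proof.
move=> /subsetP EF; rewrite /Prob [X in X <= _]big_mkcond [X in _ <= X]big_mkcond.
apply: ler_sum => w _; case: ifP => wE; first by rewrite (EF _ wE).
by case: ifP => _; [apply: weight_ge0 | ].
Qed.

Lemma cond_mono (E F : {set Omega I}) i v : E \subset F -> cnd E i v <= cnd F i v.
Proof.
move=> EF; rewrite /cond ler_pM2r ?invr_gt0 ?P_obs_gt0 //.
by apply: P_mono; apply: setSI.
Qed.


Lemma inBpP p (E : {set Omega I}) (w : Omega I) : reflect (forall i, p <= cnd E i (w.2 i)) (w \in Bp rho eps par p E).
Proof.
apply: (iffP bigcapP) => H i.
  by move/(_ i isT): H; rewrite inE.
by move=> _; rewrite inE; exact: H.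
Qed.

Lemma div_le (a b c d : R) : 0 < b -> 0 < d -> a * d <= c * b -> a / b <= c / d.
Proof. by move=> b0 d0 h; rewrite ler_pdivrMr // mulrAC ler_pdivlMr. Qed.

Lemma P_eq (E F : {set Omega I}) :
  (forall x, ((true, x) \in E) = ((true, x) \in F)) ->
  ((false, x0) \in E) = ((false, x0) \in F) -> P E = P F.
Proof.
move=> h1 h2; rewrite !ProbE h2; congr (_ * _ + _).
by apply: eq_bigl => x; rewrite h1.
Qed.

Lemma P_neq0 i v : P (obs i v) != 0.
Proof. by rewrite gt_eqF // P_obs_gt0. Qed.

Lemma cond_setT i v : cnd setT i v = 1.
Proof. by rewrite /cond setTI divff // P_neq0. Qed.

Lemma cond_GT i : cnd (Gev I) i true = 1.
Proof.
rewrite /cond (@P_eq _ (obs i true)) ?divff ?P_neq0 //.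
  by move=> x; rewrite !inE.
by rewrite !inE /= ffunE.
Qed.

Lemma den_pos : 0 < 1 - rho * (1 - eps).
Proof. have : 0 < rho * eps by apply: mulr_gt0. by H4; nra. Qed.

Lemma cond_GF i : q1 rho eps <= cnd (Gev I) i false.
Proof.
have e : P (Gev I :&: obs i false) = rho * (1 - (1 - eps) * aa i).
  rewrite ProbE !inE /= mulr0 addr0 -sumF; congr (_ * _).
  by apply: eq_bigl => x; rewrite !inE /=; case: (x i).
rewrite /cond e P_obsF /q1.
have ht : (1 - eps) * aa i <= 1 - eps.
  by rewrite -[X in _ <= X]mulr1; apply: ler_wpM2l; [H4; lra | apply: aa_le1].
set t := (1 - eps) * aa i in ht *.
apply: div_le; first exact: den_pos.
  have : 0 <= rho * (1 - t) by apply: mulr_ge0; H4; lra.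
  by H4; lra.
have : 0 <= rho * (1 - rho) * (1 - t - eps).
  by apply: mulr_ge0; [apply: mulr_ge0|]; H4; lra.
by H4; nra.
Qed.

Definition PE (j : 'I_I) : {set Omega I} :=
  [set w : Omega I | if par j is Some k then w.2 k else w.1].

Lemma cond_le_PE (E : {set Omega I}) j : E \subset PE j -> cnd E j false <= q1 rho eps.
Proof.
move=> EP; apply: (le_trans (cond_mono j false EP)).
have e : P (PE j :&: obs j false) = rho * (eps * aa j).
  rewrite ProbE !inE /= ffunE; case: (par j) => [k|] /=; rewrite ?ffunE mulr0 addr0;
  rewrite -sum_prF; congr (_ * _); apply: eq_bigl => x; rewrite !inE /parent_rec /=;
  by case: (par j); case: (x j).
rewrite /cond e P_obsF /q1.
have ha := aa_le1 j; have ha0 := aa_gt0 j.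
apply: div_le.
- have := t_le1 j; set t := (1 - eps) * aa j => ht.
  have : 0 <= rho * (1 - t) by apply: mulr_ge0; H4; lra.
  by H4; lra.
- exact: den_pos.
have : 0 <= rho * eps * (1 - aa j).
  by apply: mulr_ge0; [apply: mulr_ge0|]; H4; lra.
by H4; nra.
Qed.

Lemma cond_empty (E : {set Omega I}) j v : E :&: obs j v = set0 -> cnd E j v = 0.
Proof. by move=> h; rewrite /cond h /Prob big_set0 mul0r. Qed.

Hypothesis I0 : (0 < I)%N.

Lemma P_Ystar : P (Ystar I) = rho * (1 - eps) ^+ I.
Proof.
rewrite ProbE.
have -> : (false, x0) \in Ystar I = false.
  rewrite !inE /=; apply/negbTE/negP => /forallP/(_ (Ordinal I0)).
  by rewrite ffunE.
rewrite mulr0 addr0 -W_x1; congr (_ * _).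
transitivity (\sum_(x : X | x == x1) W x); last exact: big_pred1_eq.
apply: eq_bigl => x; rewrite !inE /=.
apply/forallP/eqP => [H|->]; last by move=> i; rewrite ffunE.
by apply/ffunP => i; rewrite ffunE; apply: H.
Qed.

Lemma Ystar_obs i : Ystar I :&: obs i true = Ystar I.
Proof.
apply/setIidPl/subsetP => w; rewrite !inE => /forallP/(_ i) ->.
by [].
Qed.

Lemma expI : (1 - eps) ^+ I = (1 - eps) * q2 I eps.
Proof. by rewrite /q2 -exprS prednK. Qed.

Lemma q2_ge0 : 0 <= q2 I eps.
Proof. by apply: exprn_ge0; H4; lra. Qed.

Lemma cond_YT i : q2 I eps <= cnd (Ystar I) i true.
Proof.
rewrite /cond Ystar_obs P_Ystar P_obsT expI.
rewrite ler_pdivlMr; last first.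
  by apply: mulr_gt0 => //; apply: mulr_gt0; [H4; lra | apply: aa_gt0].
have := aa_le1 i; have := q2_ge0; set c := q2 I eps => c0 ha.
have : 0 <= rho * (1 - eps) * c * (1 - aa i).
  by apply: mulr_ge0; [apply: mulr_ge0; [apply: mulr_ge0|]|]; H4; lra.
by H4; nra.
Qed.

Lemma aa_seed s : par s = None -> aa s = 1.
Proof.
move=> ps; rewrite /aa -(total eps Htree); apply: eq_bigl => x.
by rewrite /parent_rec ps.
Qed.

Lemma cond_YT_seed s : par s = None -> cnd (Ystar I) s true <= q2 I eps.
Proof.
move=> ps; rewrite /cond Ystar_obs P_Ystar P_obsT expI aa_seed // mulr1.
rewrite ler_pdivrMr; last by apply: mulr_gt0 => //; H4; lra.
by rewrite mulrA mulrC.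
Qed.


Local Notation f1 := (fun o => obind par o).

Lemma iter_none n : iter n f1 None = None.
Proof. by elim: n => //= n ->. Qed.

Definition D l j := iter l f1 (Some j) == None.

Lemma D_mono l m j : D l j -> D (m + l)%N j.
Proof. by rewrite /D iterD => /eqP ->; rewrite iter_none. Qed.

Lemma D_all : exists L, forall j, D L j.
Proof.
suff: forall s : seq 'I_I, exists L, forall j, j \in s -> D L j.
  by move=> /(_ (enum 'I_I)) [L HL]; exists L => j; apply: HL; rewrite mem_enum.
elim => [|a s [L HL]]; first by exists 0.
have [m Hm] := Htree a.
exists (m + L)%N => j; rewrite in_cons => /orP[/eqP->|js].
  by rewrite (addnC m L); apply: D_mono; rewrite /D Hm.
by apply: D_mono; apply: HL.
Qed.

Lemma seed_exists : exists s, par s = None.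
Proof.
have [j [_ hj]] := @frontier _ par Htree set0 (Ordinal I0) (negbT (in_set0 _)).
exists j; case E: (par j) => [k|] //.
by have := hj k E; rewrite in_set0.
Qed.

Definition Rl l := [set w : Omega I | [forall j, D l j ==> w.2 j]].

Lemma q1_ge0 : 0 <= q1 rho eps.
Proof.
rewrite /q1; apply: divr_ge0; last by apply: ltW; apply: den_pos.
by apply: mulr_ge0; H4; lra.
Qed.

Lemma q1_lt1 : q1 rho eps < 1.
Proof. rewrite /q1 ltr_pdivrMr ?den_pos //; by H4; lra. Qed.

Lemma q2_le1 : q2 I eps <= 1.
Proof. by apply: exprn_ile1; H4; lra. Qed.

Lemma Bp_mono p (E F : {set Omega I}) : E \subset F -> Bp rho eps par p E \subset Bp rho eps par p F.
Proof.
move=> EF; apply/subsetP => w /inBpP H; apply/inBpP => i.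
by apply: (le_trans (H i)); apply: cond_mono.
Qed.

Lemma Bp_force p (E : {set Omega I}) j : q1 rho eps < p ->
  (E \subset PE j \/ E :&: obs j false = set0) ->
  forall w, w \in Bp rho eps par p E -> w.2 j.
Proof.
move=> hp hE w /inBpP /(_ j); case: (w.2 j) => // hle.
have : cnd E j false <= q1 rho eps.
  case: hE => [h|h]; first exact: cond_le_PE.
  by rewrite cond_empty //; apply: q1_ge0.
move=> h2; have := le_trans hle h2; by rewrite leNgt hp.
Qed.

Lemma iter_sub p : q1 rho eps < p ->
  forall l, iter l.+1 (Bp rho eps par p) (Gev I) \subset Rl l.+1.
Proof.
move=> hp; elim => [|l IH].
  apply/subsetP => w wB; rewrite inE; apply/forallP => j; apply/implyP.
  rewrite /D /= => /eqP pj; apply: (Bp_force hp _ wB); left.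
  by apply/subsetP => v; rewrite !inE pj.
apply/subsetP => w wB; rewrite inE; apply/forallP => j; apply/implyP.
rewrite /D iterSr /= => hj; apply: (Bp_force hp _ wB).
case E: (par j) hj => [k|] hj.
  left; apply: (subset_trans IH); apply/subsetP => v; rewrite !inE E.
  by move=> /forallP /(_ k) /implyP; apply.
right; apply/setP => v; rewrite !inE; apply/negbTE/negP => /andP[/(subsetP IH)].
rewrite inE => /forallP /(_ j) /implyP.
by rewrite /D iterSr /= E iter_none => /(_ isT) ->.
Qed.

Lemma iter_sub_all p : q1 rho eps < p ->
  exists L, forall w, w \in iter L.+1 (Bp rho eps par p) (Gev I) -> forall j, w.2 j.
Proof.
move=> hp; have [L HL] := D_all; exists L => w wI j.
have := subsetP (iter_sub hp L) w wI; rewrite inE => /forallP /(_ j) /implyP; apply.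
by have := D_mono 1 (HL j).
Qed.

Lemma main_sec p :
  q1 rho eps < q2 I eps ->
  (p <= q1 rho eps -> forall w, Cp rho eps par p (Gev I) w) /\
  (q1 rho eps < p <= q2 I eps ->
     forall w, Cp rho eps par p (Gev I) w <-> w \in Ystar I) /\
  (q2 I eps < p -> forall w, ~ Cp rho eps par p (Gev I) w).
Proof.
move=> q12; split; [|split].
- move=> hp w l.
  suff -> : iter l.+1 (Bp rho eps par p) (Gev I) = setT by rewrite inE.
  elim: l => [|l IH].
    apply/setP => v; rewrite inE; apply/inBpP => i; case: (v.2 i).
      by rewrite cond_GT; apply: (le_trans hp); apply: ltW; apply: q1_lt1.
    by apply: (le_trans hp); apply: cond_GF.
  rewrite iterS IH; apply/setP => v; rewrite inE; apply/inBpP => i.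
  by rewrite cond_setT; apply: (le_trans hp); apply: ltW; apply: q1_lt1.
- move=> /andP[hp1 hp2] w; split.
    move=> hC; have [L HL] := iter_sub_all hp1.
    by rewrite inE; apply/forallP => j; apply: (HL w (hC L)).
  move=> wY l; move: w wY; apply/subsetP; elim: l => [|l IH].
    apply/subsetP => v; rewrite inE => /forallP vY; apply/inBpP => i.
    by rewrite vY cond_GT; apply: (le_trans hp2); apply: q2_le1.
  rewrite iterS; apply: subset_trans (Bp_mono p IH).
  apply/subsetP => v; rewrite inE => /forallP vY; apply/inBpP => i.
  by rewrite vY; apply: (le_trans hp2); apply: cond_YT.
- move=> hp w hC.
  have hp1 : q1 rho eps < p by apply: lt_trans hp.
  have [L HL] := iter_sub_all hp1.
  have [s ps] := seed_exists.
  have sub : iter L.+1 (Bp rho eps par p) (Gev I) \subset Ystar I.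
    by apply/subsetP => v vI; rewrite inE; apply/forallP => j; apply: HL.
  have := hC L.+1; rewrite iterS => /inBpP /(_ s).
  rewrite (HL w (hC L) s) => h.
  have := le_trans h (le_trans (cond_mono s true sub) (cond_YT_seed ps)).
  by rewrite leNgt hp.
Qed.

End ProbSec.

Lemma q_order (R : realFieldType) (I : nat) (rho eps epsbar : R) :
  (2 <= I)%N -> 0 < rho < 1 ->
  0 < epsbar < 1 -> q1 rho epsbar = q2 I epsbar ->
  0 < eps -> eps < epsbar -> q1 rho eps < q2 I eps.
Proof.
move=> hI /andP[r0 r1] /andP[e0 e1] hq ep epb.
apply: (@lt_le_trans _ _ (q1 rho epsbar)).
  have h1 := mulr_gt0 r0 ep; have h2 := mulr_gt0 r0 e0.
  rewrite /q1 ltr_pdivrMr; last by nra.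
  rewrite mulrAC ltr_pdivlMr; last by nra.
  have : 0 < rho * (1 - rho) * (epsbar - eps).
    by apply: mulr_gt0; [apply: mulr_gt0|]; lra.
  nra.
rewrite hq /q2; apply: ltW; rewrite ltrXn2r; first by move: hI; case: (I) => [|[|n]].
  lra.
lra.
Qed.



Theorem proposition1 (R : realFieldType) (I : nat) (rho eps epsbar : R)
  (par : 'I_I -> option 'I_I) (p : R) :
  (2 <= I)%N -> 0 < rho < 1 ->
  0 < epsbar < 1 -> q1 rho epsbar = q2 I epsbar ->
  0 < eps -> eps < epsbar ->
  info_tree par ->
  (p <= q1 rho eps -> forall w, Cp rho eps par p (Gev I) w) /\
  (q1 rho eps < p <= q2 I eps ->
     forall w, Cp rho eps par p (Gev I) w <-> w \in Ystar I) /\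
  (q2 I eps < p -> forall w, ~ Cp rho eps par p (Gev I) w).
Proof.
move=> hI hr he hq ep epb ht.
have q12 := q_order hI hr he hq ep epb.
case/andP: hr => r0 r1; case/andP: he => e0 e1.
have e1' : eps < 1 by apply: lt_trans e1.
have I0 : (0 < I)%N by apply: leq_trans hI.
exact: (main_sec ht r0 r1 ep e1' I0 p q12).
Qed.
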